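(* Let $S\subseteq\mathbb{Q}$ be a finite nonempty set and let $r\in\mathbb{Q}\setminus\{-1,0,1\}$. Let $X=S\times S$, regarded as a finite alphabet whose letters are pairs $\begin{bmatrix} s_1\\ s_2\end{bmatrix}$ with $s_1,s_2\in S$; a word $\begin{bmatrix}\sigma_1\\ \tau_1\end{bmatrix}\cdots\begin{bmatrix}\sigma_\ell\\ \tau_\ell\end{bmatrix}\in X^*$ is identified with the pair of equal-length words $\begin{bmatrix} w_1\\ w_2\end{bmatrix}$, $w_1=\sigma_1\cdots\sigma_\ell$, $w_2=\tau_1\cdots\tau_\ell\in S^*$. Then the language \[L=\left\{\begin{bmatrix} w_1\\ w_2\end{bmatrix}\in X^*\colon \mathrm{val}_r(w_1)=\mathrm{val}_r(w_2)\right\}\] is effectively regular, i.e. it is regular and a finite automaton accepting it can be computed from $S$ and $r$.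
   Context: For a nonzero rational number $r$ and a finite word $w=w_{n-1}\cdots w_1w_0$ whose letters (''digits'') $w_i$ are rational numbers (written left to right, $w_0$ being the rightmost letter), $\mathrm{val}_r(w)=\sum_{i=0}^{n-1}w_i r^i$. *)

(* Defs.v *)
From HB Require Import structures.
From mathcomp Require Import all_boot all_order all_algebra.
Set Implicit Arguments. Unset Strict Implicit. Unset Printing Implicit Defensive.
Import Order.TTheory GRing.Theory Num.Theory.
Local Open Scope ring_scope.

(* val_r(w) = sum_{i=0}^{n-1} w_i r^i, where the word w = w_{n-1} ... w_0 is
   stored as the sequence [:: w_{n-1}; ...; w_0] (left to right), so that
   w_i = nth 0 w (size w - 1 - i). *)
Definition valr (r : rat) (w : seq rat) : rat :=
  \sum_(i < size w) nth 0 w (size w - 1 - i)%N * r ^+ i.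

Record dfa (T : finType) := Dfa {
  dfa_size : nat;
  dfa_start : 'I_dfa_size;
  dfa_trans : 'I_dfa_size -> T -> 'I_dfa_size;
  dfa_final : pred 'I_dfa_size
}.

Definition dfa_accept (T : finType) (A : dfa T) (w : seq T) : bool :=
  @dfa_final T A (foldl (@dfa_trans T A) (@dfa_start T A) w).

Definition pair_alph (S : seq rat) : finType := (seq_sub S * seq_sub S)%type.

Definition top_word (S : seq rat) (w : seq (pair_alph S)) : seq rat :=
  map (fun x => ssval x.1) w.
Definition bot_word (S : seq rat) (w : seq (pair_alph S)) : seq rat :=
  map (fun x => ssval x.2) w.

(* Main.v *)
Require Import Defs.
From HB Require Import structures.
From mathcomp Require Import all_boot all_order all_algebra.
From mathcomp Require Import ring lra zify.
Import Order.TTheory GRing.Theory Num.Theory.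
Local Open Scope ring_scope.

Lemma valr_nil r : valr r [::] = 0.
Proof. by rewrite /valr big_ord0. Qed.

Lemma valr_rcons r s a : valr r (rcons s a) = r * valr r s + a.
Proof.
rewrite /valr size_rcons big_ord_recl /= expr0 mulr1.
rewrite nth_rcons.
have -> : ((size s).+1 - 1 - 0 = size s)%N by lia.
rewrite ltnn eqxx addrC mulr_sumr.
congr (_ + _); apply: eq_bigr => i _.
rewrite nth_rcons.
have -> : ((size s).+1 - 1 - bump 0 i = size s - 1 - i)%N.
  rewrite /bump /=; lia.
have -> : (size s - 1 - i < size s)%N by have := ltn_ord i; lia.
by rewrite /bump /= exprS mulrCA.
Qed.

Definition diffw S r (w : seq (pair_alph S)) :=
  valr r (top_word w) - valr r (bot_word w).

Definition stp S r (d : rat) (x : pair_alph S) := r * d + (ssval x.1 - ssval x.2).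
Arguments diffw {S}.
Arguments stp {S}.

Lemma diffw_nil S r : diffw r ([::] : seq (pair_alph S)) = 0.
Proof. by rewrite /diffw /top_word /bot_word /= valr_nil subrr. Qed.

Lemma diffw_rcons S r (w : seq (pair_alph S)) x :
  diffw r (rcons w x) = stp r (diffw r w) x.
Proof.
rewrite /diffw /top_word /bot_word !map_rcons !valr_rcons /stp; ring.
Qed.

Lemma diffw_cat S r (w v : seq (pair_alph S)) :
  diffw r (w ++ v) = r ^+ size v * diffw r w + diffw r v.
Proof.
elim/last_ind: v => [|v x IH]; first by rewrite cats0 diffw_nil expr0 mul1r addr0.
rewrite -rcons_cat !diffw_rcons /stp IH size_rcons exprS; ring.
Qed.

Definition Dn (S : seq rat) : int := \prod_(s <- S) denq s.

Lemma DS {S s} : s \in S -> ((Dn S)%:~R * s) \is a Num.int.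
Proof.
move=> sS; rewrite /Dn (big_rem s sS) /= intrM mulrAC.
have -> : (denq s)%:~R * s = (numq s)%:~R by rewrite numqE mulrC.
rewrite -intrM.
exact: intr_int.
Qed.

Lemma Dint S r (w : seq (pair_alph S)) :
  (Dn S)%:~R * (denq r)%:~R ^+ size w * diffw r w \is a Num.int.
Proof.
elim/last_ind: w => [|w x IH]; first by rewrite diffw_nil mulr0 rpred0.
rewrite diffw_rcons /stp size_rcons.
have -> : (Dn S)%:~R * (denq r)%:~R ^+ (size w).+1 *
   (r * diffw r w + (ssval x.1 - ssval x.2)) =
   (r * (denq r)%:~R) * ((Dn S)%:~R * (denq r)%:~R ^+ size w * diffw r w)
   + (denq r)%:~R ^+ (size w).+1 * ((Dn S)%:~R * ssval x.1)
   - (denq r)%:~R ^+ (size w).+1 * ((Dn S)%:~R * ssval x.2).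
  rewrite exprS; ring.
have -> : r * (denq r)%:~R = (numq r)%:~R by rewrite numqE.
have h1 := DS (ssvalP x.1); have h2 := DS (ssvalP x.2).
by rewrite rpredB ?rpredD // rpredM ?rpredX ?intr_int.
Qed.

Lemma bezout_int (x : rat) (a b : int) : coprimez a b ->
  a%:~R * x \is a Num.int -> b%:~R * x \is a Num.int -> x \is a Num.int.
Proof.
move=> cab ha hb; case: (Bezoutz a b) => u [v huv].
move: cab; rewrite /coprimez => /eqP gab.
have -> : x = u%:~R * (a%:~R * x) + v%:~R * (b%:~R * x).
  by rewrite !mulrA -!intrM -mulrDl -intrD huv gab mul1r.
by rewrite rpredD // rpredM // intr_int.
Qed.

Definition Mb (S : seq rat) : rat := 2 * \sum_(s <- S) `|s|.
Definition Bb (S : seq rat) (r : rat) : rat := Mb S / `| `|r| - 1 |.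

Lemma abs_le_sum {S : seq rat} {s : rat} : s \in S -> `|s| <= \sum_(t <- S) `|t|.
Proof.
move=> sS; rewrite (big_rem s sS) /= lerDl.
by apply: sumr_ge0 => i _.
Qed.

Lemma Mb_ge0 S : 0 <= Mb S.
Proof. by rewrite /Mb mulr_ge0 // sumr_ge0. Qed.

Lemma Mbound {S} (x : pair_alph S) : `|ssval x.1 - ssval x.2| <= Mb S.
Proof.
have h1 := abs_le_sum (ssvalP x.1); have h2 := abs_le_sum (ssvalP x.2).
apply: le_trans (ler_normB _ _) _; rewrite /Mb; lra.
Qed.

Lemma stp_bound {S} (r d : rat) (x : pair_alph S) :
  `|r| * `|d| - Mb S <= `|stp r d x| /\ `|stp r d x| <= `|r| * `|d| + Mb S.
Proof.
have hM := Mbound x; rewrite /stp; split.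
  have := lerB_normD (r * d) (ssval x.1 - ssval x.2).
  rewrite normrM; lra.
have := ler_normD (r * d) (ssval x.1 - ssval x.2); rewrite normrM; lra.
Qed.

Lemma bound_small S r (w : seq (pair_alph S)) :
  `|r| < 1 -> `|diffw r w| <= Bb S r.
Proof.
move=> hr.
have eB : Bb S r * (1 - `|r|) = Mb S.
  rewrite /Bb ler0_norm ?subr_le0 ?(ltW hr) // opprB mulfVK //.
  by rewrite subr_eq0 eq_sym (lt_eqF hr).
have hB : 0 <= Bb S r by rewrite /Bb divr_ge0 ?Mb_ge0.
elim/last_ind: w => [|w x IH]; first by rewrite diffw_nil normr0.
rewrite diffw_rcons; have [_ h] := stp_bound r (diffw r w) x.
apply: le_trans h _.
have : `|r| * `|diffw r w| <= `|r| * Bb S r by rewrite ler_wpM2l.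
nra.
Qed.

Lemma grow {S} r (w v : seq (pair_alph S)) :
  1 < `|r| -> Bb S r < `|diffw r w| -> Bb S r < `|diffw r (w ++ v)|.
Proof.
move=> hr hd.
have eB : Bb S r * (`|r| - 1) = Mb S.
  rewrite /Bb gtr0_norm ?subr_gt0 // mulfVK //.
  by rewrite subr_eq0 gt_eqF.
elim/last_ind: v => [|v x IH]; first by rewrite cats0.
rewrite -rcons_cat diffw_rcons; have [h _] := stp_bound r (diffw r (w ++ v)) x.
apply: lt_le_trans h.
have : `|r| * Bb S r < `|r| * `|diffw r (w ++ v)|.
  by rewrite ltr_pM2l // (lt_trans ltr01 hr).
nra.
Qed.

Definition Nb (S : seq rat) (r : rat) : nat := Num.truncn ((Dn S)%:~R * Bb S r).

Definition Kset (S : seq rat) (r : rat) : seq rat :=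
  [seq (((i%:Z - (Nb S r)%:Z)%:~R) / (Dn S)%:~R : rat) | i <- iota 0 (Nb S r + Nb S r).+1].

Arguments Kset : simpl never.

Lemma Dn_gt0 S : 0 < Dn S.
Proof. by rewrite /Dn; apply: prodr_gt0 => s _; exact: denq_gt0. Qed.

Lemma Bb_ge0 S r : 0 <= Bb S r.
Proof. by rewrite /Bb divr_ge0 ?Mb_ge0. Qed.

Lemma core S r (w v : seq (pair_alph S)) : r != -1 -> r != 1 ->
  diffw r (w ++ v) = 0 -> diffw r w \in Kset S r.
Proof.
move=> rN1 r1 H0.
set d := diffw r w.
have hB : `|d| <= Bb S r.
  case: (ltrgtP `|r| 1) => hr.
  - exact: bound_small.
  - rewrite leNgt; apply/negP => h; have := grow r w v hr h.
    by rewrite H0 normr0 ltNge Bb_ge0.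
  - case: (lerP 0 r) => h; [rewrite ger0_norm in hr | rewrite ltr0_norm in hr] => //.
      by rewrite hr eqxx in r1.
    by rewrite -hr opprK eqxx in rN1.
have hint : (Dn S)%:~R * d \is a Num.int.
  apply: (@bezout_int _ (denq r ^+ size w) (numq r ^+ size v)).
  - apply: coprimezXl; apply: coprimezXr; rewrite coprimezE.
    by rewrite coprime_sym coprime_num_den.
  - rewrite rmorphXn /= mulrCA mulrA; exact: Dint.
  - have e1 : r ^+ size v * d = - diffw r v.
      by apply/eqP; rewrite -addr_eq0 -diffw_cat H0.
    have -> : (numq r ^+ size v)%:~R * ((Dn S)%:~R * d) =
       ((Dn S)%:~R * (denq r)%:~R ^+ size v * (r ^+ size v * d)).
      rewrite rmorphXn /= numqE exprMn; ring.
    by rewrite e1 mulrN rpredN Dint.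
case/intrP: hint => z hz.
have Dpos : (0 : rat) < (Dn S)%:~R by rewrite ltr0z Dn_gt0.
have hd : d = z%:~R / (Dn S)%:~R by rewrite -hz mulrAC divff ?mul1r // gt_eqF.
have hzN : `|z| <= (Nb S r)%:Z.
  have h1 : (`|z|%:~R : rat) <= (Dn S)%:~R * Bb S r.
    by rewrite intr_norm -hz normrM (gtr0_norm Dpos) ler_wpM2l // ltW.
  have h2 := truncnS_gt ((Dn S)%:~R * Bb S r).
  have h3 : (`|z|%:~R : rat) < ((Nb S r).+1%:Z)%:~R.
    by apply: le_lt_trans h1 _; rewrite /Nb.
  rewrite ltr_int in h3; lia.
apply/mapP; exists (absz (z + (Nb S r)%:Z)).
  rewrite mem_iota /=; lia.
rewrite hd; congr (_%:~R / _); lia.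
Qed.

Opaque Kset.

Definition mkdfa (S : seq rat) (r : rat) : dfa (pair_alph S) :=
  let K := Kset S r in
  @Dfa (pair_alph S) (size K).+1
    (inord (index 0 K))
    (fun i x => inord (if (i < size K)%N then index (stp r (nth 0 K i) x) K else size K))
    (fun i => (i < size K)%N && (nth 0 K i == 0)).

Lemma start_val S r : r != -1 -> r != 1 ->
  val (@dfa_start _ (mkdfa S r)) = index 0 (Kset S r).
Proof.
move=> rN1 r1; rewrite /mkdfa [@dfa_start _ _]/=; apply: inordK; rewrite ltnS; exact: index_size.
Qed.

Lemma trans_val S r (i : 'I_(@dfa_size _ (mkdfa S r))) x :
  val (@dfa_trans _ (mkdfa S r) i x) =
  if (i < size (Kset S r))%N then index (stp r (nth 0 (Kset S r) i) x) (Kset S r)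
  else size (Kset S r).
Proof.
rewrite /mkdfa [@dfa_trans _ _]/=; apply: inordK; rewrite ltnS; case: ifP => // _; exact: index_size.
Qed.

Lemma final_val S r (i : 'I_(@dfa_size _ (mkdfa S r))) :
  @dfa_final _ (mkdfa S r) i = (val i < size (Kset S r))%N && (nth 0 (Kset S r) (val i) == 0).
Proof. by []. Qed.

Lemma inv_dfa S r (w : seq (pair_alph S)) : r != -1 -> r != 1 ->
  (val (foldl (@dfa_trans _ (mkdfa S r)) (@dfa_start _ (mkdfa S r)) w) = index (diffw r w) (Kset S r) /\ diffw r w \in Kset S r) \/
  (val (foldl (@dfa_trans _ (mkdfa S r)) (@dfa_start _ (mkdfa S r)) w) = size (Kset S r) /\ forall v, diffw r (w ++ v) != 0).
Proof.
move=> rN1 r1.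
elim/last_ind: w => [|w x IH].
  have h0 : 0 \in Kset S r by have := @core S r [::] [::] rN1 r1; rewrite diffw_nil; apply.
  by left; rewrite diffw_nil start_val.
rewrite foldl_rcons.
move: IH; set st := foldl _ _ w => IH.
case: IH => [[hst hin] | [hst hv]].
  rewrite trans_val hst index_mem hin nth_index // -diffw_rcons.
  case hK : (diffw r (rcons w x) \in Kset S r).
    by left.
  right; split.
    by rewrite memNindex ?hK.
  move=> v; apply/eqP => h; have := @core S r _ _ rN1 r1 h; by rewrite hK.
right; split.
  by rewrite trans_val hst ltnn.
by move=> v; rewrite cat_rcons.
Qed.

Theorem lemma3p3 (S : seq rat) (r : rat) :
  S != [::] -> r != -1 -> r != 0 -> r != 1 ->
  { A : dfa (pair_alph S) |
    forall w : seq (pair_alph S),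
      dfa_accept A w = (valr r (top_word w) == valr r (bot_word w)) }.
Proof.
move=> _ rN1 _ r1; exists (mkdfa S r) => w.
rewrite -subr_eq0 /dfa_accept -/(diffw r w).
have := inv_dfa S r w rN1 r1.
set st := foldl _ _ w.
case => [[hst hin] | [hst hv]].
  by rewrite final_val hst index_mem hin nth_index.
rewrite final_val hst ltnn /=; apply/esym/negbTE; have := hv [::]; by rewrite cats0.
Qed.
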